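(* Let $q=2^m$ and let $d>3$ be an odd integer, $f(x)=x^d$. Let $S_1$ and $S_2$ be the projective surfaces (cones) in $\mathbb{P}^3(\overline{\mathbb{F}}_q)$, with homogeneous coordinates $(x:y:z:t)$, defined by $P_f(x,y,z)=0$ and $P_f(x,y,t)=0$ respectively, and let $X=S_1\cap S_2$. Then $X$ has dimension 1, i.e. $X$ is a projective curve.
   Context: For $f(x)=x^d$, $P_f(x,y,z)$ denotes the homogeneous polynomial $\frac{x^d+y^d+z^d+(x+y+z)^d}{(x+y)(x+z)(y+z)}$ (the division is exact in characteristic 2), of degree $d-3$. *)

(* Defs.v *)
From HB Require Import structures.
From mathcomp Require Import all_boot all_order all_algebra all_field.
From mathcomp Require Import mpoly.
Set Implicit Arguments. Unset Strict Implicit. Unset Printing Implicit Defensive.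
Import Order.TTheory GRing.Theory.
Local Open Scope ring_scope.

Definition Pnum (F : comNzRingType) (d : nat) : {mpoly F[3]} :=
  'X_(0 : 'I_3) ^+ d + 'X_(1 : 'I_3) ^+ d + 'X_(2 : 'I_3) ^+ d
  + ('X_(0 : 'I_3) + 'X_(1 : 'I_3) + 'X_(2 : 'I_3)) ^+ d.
Definition Pden (F : comNzRingType) : {mpoly F[3]} :=
  ('X_(0 : 'I_3) + 'X_(1 : 'I_3)) * ('X_(0 : 'I_3) + 'X_(2 : 'I_3))
  * ('X_(1 : 'I_3) + 'X_(2 : 'I_3)).

(* P is P_f(x,y,z) exactly when P * (x+y)(x+z)(y+z) = numerator
   (the quotient is unique since F[x,y,z] is a domain). *)
Definition is_Pf (F : comNzRingType) (d : nat) (P : {mpoly F[3]}) : Prop :=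
  P * Pden F = Pnum F d.

Definition ev3 (F : comNzRingType) (P : {mpoly F[3]}) (a b c : F) : F :=
  P.@[fun i : 'I_3 => [:: a; b; c]`_i].

(* A subset of P^n is
   represented by its affine cone X : pred 'rV[F]_(n.+1) (only nonzero
   vectors matter).  A projective linear subspace of projective dimension k
   is the row space of a row-free (k+1) x (n+1) matrix.
   Definition (standard, e.g. Shafarevich I.6 / Harris Lect. 11):
   dim X = r  iff  some linear subspace of dimension n-r-1 misses X and
   every linear subspace of dimension n-r meets X. *)
Definition meets (F : fieldType) (n k : nat) (X : pred 'rV[F]_(n.+1))
  (A : 'M[F]_(k, n.+1)) : Prop :=
  exists v : 'rV[F]_(n.+1), [/\ v != 0, (v <= A)%MS & X v].

Definition proj_dim (F : fieldType) (n : nat) (X : pred 'rV[F]_(n.+1))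
  (r : nat) : Prop :=
  [/\ (r <= n)%N,
      (exists A : 'M[F]_(n - r, n.+1), row_free A /\ ~ meets X A)
    & (forall A : 'M[F]_((n - r).+1, n.+1), row_free A -> meets X A)].

Definition Xset (F : comNzRingType) (P : {mpoly F[3]}) : pred 'rV[F]_4 :=
  fun v => (ev3 P (v 0 0) (v 0 1) (v 0 2) == 0)
        && (ev3 P (v 0 0) (v 0 1) (v 0 3) == 0).

(* Main.v *)
Require Import Defs.
From HB Require Import structures.
From mathcomp Require Import all_boot all_order all_algebra all_field.
From mathcomp Require Import mpoly.
From mathcomp Require Import ring zify.
Set Implicit Arguments. Unset Strict Implicit. Unset Printing Implicit Defensive.
Import Order.TTheory GRing.Theory.
Local Open Scope ring_scope.
Section Gen.
Variable (F : fieldType).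
Variables (S : comNzRingType) (f : {rmorphism F -> S}) (h : 'I_3 -> S).
Lemma mmapXi i : mmap f h 'X_i = h i.
Proof. by rewrite mmapX mmap1U. Qed.
Lemma mmap_den : mmap f h (Pden F) = (h 0 + h 1) * (h 0 + h 2) * (h 1 + h 2).
Proof. by rewrite /Pden !rmorphM !rmorphD /= !mmapXi. Qed.
Lemma mmap_num d : mmap f h (Pnum F d) = h 0 ^+ d + h 1 ^+ d + h 2 ^+ d + (h 0 + h 1 + h 2) ^+ d.
Proof. by rewrite /Pnum !rmorphD !rmorphXn !rmorphD /= !mmapXi. Qed.
Lemma mmapP d P : is_Pf d P -> mmap f h P * ((h 0 + h 1) * (h 0 + h 2) * (h 1 + h 2))
   = h 0 ^+ d + h 1 ^+ d + h 2 ^+ d + (h 0 + h 1 + h 2) ^+ d.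
Proof. by move=> hP; rewrite -mmap_den -mmap_num -rmorphM hP. Qed.
Lemma mmap_comp (T : comNzRingType) (g : {rmorphism S -> T}) (f' : F -> T) (h' : 'I_3 -> T) p :
  (forall c, g (f c) = f' c) -> (forall i, g (h i) = h' i) -> g (mmap f h p) = mmap f' h' p.
Proof.
move=> Hf Hh; rewrite /mmap rmorph_sum; apply: eq_bigr => m _.
rewrite rmorphM Hf /mmap1 rmorph_prod; congr (_ * _); apply: eq_bigr => i _.
by rewrite rmorphXn Hh.
Qed.
End Gen.
Section Hom.
Variable (F : fieldType) (d : nat) (P : {mpoly F[3]}).
Hypothesis hP : is_Pf d P.
Hypothesis hd : (3 <= d)%N.

Lemma ev3E a b c : ev3 P a b c = mmap idfun (fun i : 'I_3 => [:: a; b; c]`_i) P.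
Proof. by []. Qed.

Lemma hom a b c l : ev3 P (l * a) (l * b) (l * c) = l ^+ (d - 3) * ev3 P a b c.
Proof.
pose hs := fun i : 'I_3 => [:: a%:P + 'X; b%:P + 'X^2; c%:P]`_i.
pose hl := fun i : 'I_3 => ('X : {poly {poly F}}) * (hs i)%:P.
have Hs := mmapP (polyC : {rmorphism F -> {poly F}}) hs hP.
have Hl := mmapP (polyC \o polyC : {rmorphism F -> {poly {poly F}}}) hl hP.
set D := (hs 0 + hs 1) * (hs 0 + hs 2) * (hs 1 + hs 2) in Hs.
have D0 : D != 0.
  rewrite /D /hs /= !mulf_neq0 //.
  - apply/eqP => /(congr1 (fun p : {poly F} => p`_2)); rewrite !coefE /=.
    by move/eqP; rewrite !(add0r, addr0) oner_eq0.
  - apply/eqP => /(congr1 (fun p : {poly F} => p`_1)); rewrite !coefE /=.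
    by move/eqP; rewrite !(add0r, addr0) oner_eq0.
  - apply/eqP => /(congr1 (fun p : {poly F} => p`_2)); rewrite !coefE /=.
    by move/eqP; rewrite !(add0r, addr0) oner_eq0.
have E : mmap (polyC \o polyC) hl P = 'X ^+ (d - 3) * (mmap polyC hs P)%:P.
  have MD : (hl 0 + hl 1) * (hl 0 + hl 2) * (hl 1 + hl 2) = 'X ^+ 3 * D%:P.
    by rewrite /hl /D !rmorphM !rmorphD /=; ring.
  apply: (mulIf (x := (hl 0 + hl 1) * (hl 0 + hl 2) * (hl 1 + hl 2))).
    by rewrite MD mulf_neq0 ?polyC_eq0 // expf_neq0 // polyX_eq0.
  rewrite Hl MD mulrACA -exprD subnK // -rmorphM Hs.
  rewrite /hl -!mulrDr !exprMn -!mulrDr.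
  move: (hs 0) (hs 1) (hs 2) => x0 x1 x2.
  by rewrite !rmorphD !rmorphXn !rmorphD.
have := congr1 (horner_eval 0 \o horner_eval (l%:P)) E.
rewrite [LHS](mmap_comp (f' := idfun) (h' := fun i : 'I_3 => [:: l * a; l * b; l * c]`_i)); last 2 first.
- by move=> x /=; rewrite /horner_eval !hornerC.
- case=> [[|[|[|m]]] Hm] /=; rewrite /horner_eval /hl /hs ?hornerE /=;
  by rewrite ?(mulr0, expr0n, addr0).
rewrite ev3E => ->; rewrite /= /horner_eval !hornerE; congr (_ * _).

rewrite -[(mmap _ _ _).[0]]/(horner_eval 0 (mmap polyC hs P)) (mmap_comp (g := horner_eval 0) (f' := idfun) (h' := fun i : 'I_3 => [:: a; b; c]`_i)) //.
- by move=> x /=; rewrite /horner_eval hornerC.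
- case=> [[|[|[|m]]] Hm] /=; rewrite /horner_eval /hs ?hornerE /=;
  by rewrite ?(mulr0, expr0n, addr0).
Qed.
End Hom.
Section P001.
Variable (F : fieldType) (d : nat) (P : {mpoly F[3]}).
Hypothesis hP : is_Pf d P.
Hypothesis hd : (3 < d)%N.
Hypothesis hodd : odd d.
Hypothesis hchar : 2%N \in [pchar F].

Lemma dR : d%:R = 1 :> F.
Proof.
by rewrite -(odd_double_half d) hodd natrD -muln2 natrM (pcharf0 hchar) mulr0 addr0.
Qed.

Lemma P001 : ev3 P 0 0 1 = 1.
Proof.
pose h := fun i : 'I_3 => [:: 0; 'X; 1]`_i : {poly F}.
have H := mmapP (polyC : {rmorphism F -> {poly F}}) h hP.
have := congr1 (fun p => p^`().[0]) H.
rewrite /h /= !derivE !hornerE /= mulr0 !mul0r add0r.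
have d0 : d != 0%N by case: d hd.
rewrite !deriv_exp !derivE !hornerE /= !(mul0rn, hornerMn, horner0, hornerXn, horner_exp, hornerD, hornerX, hornerC).
rewrite expr0n (_ : (d.-1 == 0%N) = false); last by case: d hd => [|[|]].
rewrite !(mul0r, add0r, addr0, mul1r, expr1n) dR /= mul0rn add0r => E1; rewrite -[RHS]E1.
rewrite ev3E -[(mmap _ _ _).[0]]/(horner_eval 0 (mmap polyC h P)).
rewrite (mmap_comp (f' := idfun) (h' := fun i : 'I_3 => [:: 0; 0; 1]`_i)) //.
- by move=> x /=; rewrite /horner_eval hornerC.
- by case=> [[|[|[|m]]] Hm] /=; rewrite /horner_eval ?hornerE.
Qed.
End P001.
Lemma P00z (F : fieldType) d (P : {mpoly F[3]}) : is_Pf d P -> (3 < d)%N -> odd d ->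
  2%N \in [pchar F] -> forall z, z != 0 -> ev3 P 0 0 z != 0.
Proof.
move=> hP hd ho hc z z0.
have := hom hP (ltnW hd) 0 0 1 z; rewrite !mulr0 mulr1 => ->.
by rewrite (P001 hP hd ho hc) mulr1 expf_neq0.
Qed.

Section Core.
Variable (F : closedFieldType) (d : nat) (P : {mpoly F[3]}).
Hypothesis hP : is_Pf d P.
Hypothesis hd : (3 < d)%N.

Lemma evline a1 a2 a3 b1 b2 b3 s :
  (mmap polyC (fun i : 'I_3 => [:: a1%:P + 'X * b1%:P; a2%:P + 'X * b2%:P; a3%:P + 'X * b3%:P]`_i) P).[s]
  = ev3 P (a1 + s * b1) (a2 + s * b2) (a3 + s * b3).
Proof.
rewrite ev3E -[(mmap _ _ _).[s]]/(horner_eval s (mmap polyC _ P)).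
rewrite (mmap_comp (f' := idfun) (h' := fun i : 'I_3 => [:: a1 + s * b1; a2 + s * b2; a3 + s * b3]`_i)) //.
- by move=> x /=; rewrite /horner_eval hornerC.
- by case=> [[|[|[|m]]] Hm] /=; rewrite /horner_eval ?hornerE.
Qed.

Lemma core a1 a2 a3 b1 b2 b3 :
  (exists s, ev3 P (a1 + s * b1) (a2 + s * b2) (a3 + s * b3) = 0) \/ ev3 P b1 b2 b3 = 0.
Proof.
set h := mmap polyC (fun i : 'I_3 => [:: a1%:P + 'X * b1%:P; a2%:P + 'X * b2%:P; a3%:P + 'X * b3%:P]`_i) P.
have [/closed_rootP [s hs]|] := boolP (size h != 1).
  by left; exists s; rewrite -evline; apply/eqP.
rewrite negbK => /size_poly1P [c c0 hc].
right.
have Hc : forall s, ev3 P (a1 + s * b1) (a2 + s * b2) (a3 + s * b3) = c.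
  by move=> s; rewrite -evline -/h hc hornerC.
set k := mmap polyC (fun i : 'I_3 => [:: b1%:P + 'X * a1%:P; b2%:P + 'X * a2%:P; b3%:P + 'X * a3%:P]`_i) P.
have Hk : forall r, r != 0 -> k.[r] = c * r ^+ (d - 3).
  move=> r r0; rewrite evline.
  have e : forall a b, b + r * a = r * (a + r^-1 * b).
    by move=> a b; rewrite mulrDr mulrA divff // mul1r addrC.
  by rewrite !e (hom hP (ltnW hd)) Hc mulrC.
have q0 : (k - c%:P * 'X^(d - 3)) * 'X = 0.
  apply/eqP; apply: contraT => /closed_nonrootP [x].
  rewrite /root !hornerE.
  have [->|x0] := eqVneq x 0; first by rewrite mulr0 eqxx.
  by rewrite Hk // subrr mul0r eqxx.
have : k.[0] = c * 0 ^+ (d - 3).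
  move/eqP: q0; rewrite mulf_eq0 polyX_eq0 orbF subr_eq0 => /eqP ->.
  by rewrite !hornerE.
rewrite expr0n subn_eq0 leqNgt hd /= mulr0.
by rewrite evline !mul0r !addr0.
Qed.
End Core.
Section Mx.
Variable F : fieldType.
Definition A2 : 'M[F]_(2,4) := \matrix_(i < 2, j < 4) ((j : nat) == i + 2)%N%:R.
Definition Wm : 'M[F]_(3,4) := \matrix_(i < 3, j < 4) (if (i : nat) == 2 then (2 <= j)%N else (j : nat) == i)%:R.

Lemma A2_free : row_free A2.
Proof.
apply/row_freeP; exists (\matrix_(j < 4, i < 2) ((j : nat) == i + 2)%N%:R).
apply/matrixP => i j; rewrite !mxE !big_ord_recr big_ord0 /= !mxE.
by case: i => [[|[|?]] ?]; case: j => [[|[|?]] ?] //=; rewrite ?(mul0r, mulr0, mulr1, add0r, addr0).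
Qed.

Lemma Wm_free : row_free Wm.
Proof.
apply/row_freeP; exists (\matrix_(j < 4, i < 3) ((j : nat) == i)%N%:R).
apply/matrixP => i j; rewrite !mxE !big_ord_recr big_ord0 /= !mxE.
by case: i => [[|[|[|?]]] ?]; case: j => [[|[|[|?]]] ?] //=; rewrite ?(mul0r, mulr0, mulr1, add0r, addr0).
Qed.

Lemma A2_entries (D : 'M[F]_(1,2)) k : (D *m A2) 0 k = [:: 0; 0; D 0 0; D 0 1]`_k.
Proof.
rewrite !mxE !big_ord_recr big_ord0 /= !mxE.
case: k => [[|[|[|[|?]]]] ?] //=; rewrite ?(mul0r, mulr0, mulr1, add0r, addr0).
all: rewrite ?mulr0n ?mulr1n //; congr (D _ _); exact: val_inj.
Qed.

Lemma Wm_23 (v : 'rV[F]_4) : (v <= Wm)%MS -> v 0 2 = v 0 3.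
Proof.
move/submxP => [D ->]; rewrite !mxE !big_ord_recr big_ord0 /= !mxE /=.
by rewrite big_ord0 ?(mul0r, mulr0, mulr1, add0r, addr0).
Qed.
End Mx.
Unset Implicit Arguments.

Theorem lemma3p1 (m : nat) (F : closedFieldType)
  (hm : (0 < m)%N)
  (hchar : 2%N \in [pchar F])
  (halg : forall x : F, exists k : nat, (0 < k)%N /\ x ^+ (2 ^ k) = x)
  (d : nat) (hd_odd : odd d) (hd : (3 < d)%N)
  (P : {mpoly F[3]}) (hP : is_Pf d P) :
  proj_dim (Xset P) 1.
Proof.
split => //.
- exists (A2 F); split; first exact: A2_free.
  case=> v [v0 /submxP [D vE] hX].
  move: hX; rewrite /Xset vE !A2_entries /= => /andP [/eqP h1 /eqP h2].
  have z1 : D 0 0 = 0.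
    by case: (eqVneq (D 0 0) 0) => // /(P00z hP hd hd_odd hchar); rewrite h1 eqxx.
  have z2 : D 0 1 = 0.
    by case: (eqVneq (D 0 1) 0) => // /(P00z hP hd hd_odd hchar); rewrite h2 eqxx.
  move/eqP: v0; apply; rewrite vE; apply/rowP => k.
  rewrite A2_entries mxE.
  by case: k => [[|[|[|[|?]]]] ?] //=.
- move=> A hA.
  set C := (A :&: Wm F)%MS.
  have rC : (2 <= \rank C)%N.
    have := mxrank_sum_cap A (Wm F).
    move/eqP: hA => ->; move/eqP: (Wm_free F) => ->.
    have := rank_leq_col (A + Wm F)%MS.
    rewrite -/C => ha hb; lia.
  have [i0 hi0] : exists i, ~~ (row i C <= (0 : 'rV[F]_4))%MS.
    apply/row_subPn; apply/negP => /submx0null C0; by move: rC; rewrite C0 mxrank0.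
  set w := row i0 C.
  have w0 : w != 0 by apply: contra hi0 => /eqP e; rewrite -/w e sub0mx.
  have [i1 hi1] : exists i, ~~ (row i C <= w)%MS.
    apply/row_subPn; apply: contraL rC => /mxrankS hr.
    have := rank_leq_row w => h1.
    lia.
  set u := row i1 C.
  have HC : forall v : 'rV[F]_4, (v <= C)%MS -> (v <= A)%MS /\ v 0 2 = v 0 3.
    by move=> v; rewrite sub_capmx => /andP [h1 h2]; split => //; apply: Wm_23.
  have wC : (w <= C)%MS by apply: row_sub.
  have uC : (u <= C)%MS by apply: row_sub.
  have fin : forall v : 'rV[F]_4, v != 0 -> (v <= C)%MS ->
      ev3 P (v 0 0) (v 0 1) (v 0 2) = 0 -> meets (Xset P) A.
    move=> v v0 vC hv; have [vA v23] := HC v vC.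
    exists v; split => //.
    by rewrite /Xset -v23 hv eqxx.
  have [[s hs]|hw] := core hP hd (u 0 0) (u 0 1) (u 0 2) (w 0 0) (w 0 1) (w 0 2).
  + apply: (fin (u + s *: w)).
    * apply: contra hi1 => /eqP e.
      rewrite -/u (_ : u = (- s) *: w); first exact: scalemx_sub.
      by apply/eqP; rewrite scaleNr -subr_eq0 opprK e.
    * by apply: addmx_sub => //; apply: scalemx_sub.
    * by move: hs; rewrite !mxE.
  + exact: (fin w w0 wC hw).
Qed.
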